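(* Let $\mathfrak S=(S,\xrightarrow{F},\le)$ be a complete functional WSTS. For any subset $A$ of $S$, $Post^*_{\mathfrak S}(cl(A))\subseteq cl(Post^*_{\mathfrak S}(A))$.
   Context: A complete functional WSTS: $(S,\le)$ is a well partial order which is a continuous dcpo, $F$ is a finite set of partial continuous maps $f:S\rightharpoonup S$ (domain Scott-open; $f(\bigvee D)=\bigvee f(D)$ for every directed $D\subseteq\operatorname{dom}f$), and $s\to s'$ iff $s'=f(s)$ for some $f\in F$. $Post^*_{\mathfrak S}(A)$ is the set of states reachable from elements of $A$ in zero or more steps. $cl$ denotes closure in the Scott topology (open sets: upward-closed $U$ meeting every directed set whose lub lies in $U$). *)

(* Defs.v *)
From Stdlib Require Import List.
Set Implicit Arguments.

Section Order.
Variable S : Type.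
Variable le : S -> S -> Prop.

Definition subset (A B : S -> Prop) : Prop := forall x, A x -> B x.

Definition partial_order : Prop :=
  (forall x, le x x) /\
  (forall x y z, le x y -> le y z -> le x z) /\
  (forall x y, le x y -> le y x -> x = y).

Definition well_partial_order : Prop :=
  partial_order /\
  forall a : nat -> S, exists i j, i < j /\ le (a i) (a j).

Definition is_upper (D : S -> Prop) (u : S) : Prop := forall d, D d -> le d u.

Definition is_lub (D : S -> Prop) (u : S) : Prop :=
  is_upper D u /\ forall v, is_upper D v -> le u v.

Definition directed (D : S -> Prop) : Prop :=
  (exists d, D d) /\
  forall x y, D x -> D y -> exists z, D z /\ le x z /\ le y z.

Definition dcpo : Prop :=
  partial_order /\ forall D, directed D -> exists u, is_lub D u.

Definition way_below (x y : S) : Prop :=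
  forall D u, directed D -> is_lub D u -> le y u -> exists d, D d /\ le x d.

Definition continuous_dcpo : Prop :=
  dcpo /\
  forall y, directed (fun x => way_below x y) /\ is_lub (fun x => way_below x y) y.

Definition upward_closed (U : S -> Prop) : Prop :=
  forall x y, U x -> le x y -> U y.

Definition scott_open (U : S -> Prop) : Prop :=
  upward_closed U /\
  forall D u, directed D -> is_lub D u -> U u -> exists d, D d /\ U d.

Definition scott_closed (C : S -> Prop) : Prop :=
  scott_open (fun x => ~ C x).

Definition scott_cl (A : S -> Prop) : S -> Prop :=
  fun x => forall C, scott_closed C -> subset A C -> C x.

(* partial maps S -> S, represented as S -> option S *)
Definition dom (f : S -> option S) : S -> Prop := fun x => exists y, f x = Some y.

Definition image (f : S -> option S) (D : S -> Prop) : S -> Prop :=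
  fun y => exists d, D d /\ f d = Some y.

Definition partial_continuous (f : S -> option S) : Prop :=
  scott_open (dom f) /\
  forall D u v, directed D -> subset D (dom f) -> is_lub D u ->
    f u = Some v -> is_lub (image f D) v.

Definition complete_functional_WSTS (F : list (S -> option S)) : Prop :=
  well_partial_order /\ continuous_dcpo /\
  forall f, In f F -> partial_continuous f.

Definition step (F : list (S -> option S)) (s s' : S) : Prop :=
  exists f, In f F /\ f s = Some s'.

Inductive reach (F : list (S -> option S)) : S -> S -> Prop :=
| reach_refl : forall s, reach F s s
| reach_step : forall s s' s'', step F s s' -> reach F s' s'' -> reach F s s''.

Definition Post_star (F : list (S -> option S)) (A : S -> Prop) : S -> Prop :=
  fun y => exists x, A x /\ reach F x y.

End Order.

(* Main.v *)
Require Import Defs.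
From Stdlib Require Import List Classical.

Section Aux.
Variable S : Type.
Variable le : S -> S -> Prop.
Hypothesis PO : partial_order le.

Lemma mono (f : S -> option S) x x' y :
  partial_continuous le f -> le x x' -> f x = Some y ->
  exists y', f x' = Some y' /\ le y y'.
Proof.
  destruct PO as [Hr [Ht _]].
  intros [[Hup _] Hc] Hle Hf.
  assert (Hd : dom f x') by (apply (Hup x); [exists y; auto | auto]).
  destruct Hd as [y' Hy']. exists y'; split; auto.
  pose (D := fun z => z = x \/ z = x').
  assert (Hdir : directed le D).
  { split. exists x; left; auto.
    intros a b Ha Hb. exists x'. split. right; auto.
    destruct Ha as [->| ->], Hb as [->| ->]; auto. }
  assert (Hsub : subset D (dom f)).
  { intros z [->| ->]; [exists y | exists y']; auto. }
  assert (Hlub : is_lub le D x').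
  { split. intros d [->| ->]; auto. intros v Hv. apply Hv; right; auto. }
  destruct (Hc D x' y' Hdir Hsub Hlub Hy') as [Hu _].
  apply Hu. exists x; split; [left|]; auto.
Qed.

Lemma reach_mono F x x' y :
  (forall f, In f F -> partial_continuous le f) ->
  reach F x y -> le x x' -> exists y', reach F x' y' /\ le y y'.
Proof.
  intros HF H; revert x'; induction H as [s|s s1 s2 [f [Hin Hf]] Hr IH]; intros x' Hle.
  - exists x'; split; [constructor|auto].
  - destruct (@mono f _ _ _ (HF f Hin) Hle Hf) as [s1' [Hf' Hle']].
    destruct (IH _ Hle') as [y' [Hr' Hy']].
    exists y'; split; auto. econstructor; [exists f; split; eauto|]; auto.
Qed.

Lemma reach_inacc F (C : S -> Prop) :
  (forall f, In f F -> partial_continuous le f) ->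
  scott_closed le C ->
  forall u y, reach F u y -> ~ C y ->
  forall D, directed le D -> is_lub le D u ->
  exists d, D d /\ exists y', reach F d y' /\ ~ C y'.
Proof.
  intros HF [_ HCo] u y H; induction H as [s|s s1 s2 [f [Hin Hf]] Hr IH];
    intros HnC D Hdir Hlub.
  - destruct (HCo D s Hdir Hlub HnC) as [d [Hd Hnd]].
    exists d; split; auto. exists d; split; [constructor|auto].
  - destruct PO as [Hrf [Ht _]].
    destruct (HF f Hin) as [[Hup Hopen] Hc].
    destruct (Hopen D s Hdir Hlub) as [d0 [Hd0 Hdd0]]. exists s1; auto.
    pose (D' := fun z => D z /\ dom f z).
    assert (Hdir' : directed le D').
    { split. exists d0; split; auto.
      intros a b [Ha Hda] [Hb Hdb].
      destruct Hdir as [_ Hdir]. destruct (Hdir a b Ha Hb) as [z [Hz [Haz Hbz]]].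
      exists z; split; auto. split; auto. apply (Hup a); auto. }
    assert (Hlub' : is_lub le D' s).
    { destruct Hlub as [Hu Hl]. split.
      intros d [Hd _]; auto.
      intros v Hv. apply Hl. intros d Hd.
      destruct Hdir as [_ Hdir]. destruct (Hdir d d0 Hd Hd0) as [z [Hz [Hdz Hd0z]]].
      apply Ht with z; auto. apply Hv. split; auto. apply (Hup d0); auto. }
    assert (Hsub : subset D' (dom f)) by (intros z [_ Hz]; auto).
    pose proof (Hc D' s s1 Hdir' Hsub Hlub' Hf) as Hlubi.
    assert (Hdiri : directed le (image f D')).
    { split.
      - destruct Hdd0 as [w Hw]. exists w. exists d0; split; [split|]; auto. exists w; auto.
      - intros a b [da [Hda Hfa]] [db [Hdb Hfb]].
        destruct Hdir' as [_ Hdir']. destruct (Hdir' da db Hda Hdb) as [z [Hz [Haz Hbz]]].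
        destruct (@mono f _ _ _ (HF f Hin) Haz Hfa) as [w [Hw Haw]].
        destruct (@mono f _ _ _ (HF f Hin) Hbz Hfb) as [w' [Hw' Hbw]].
        rewrite Hw in Hw'. injection Hw' as <-.
        exists w. split; [exists z; split; auto|]; auto. }
    destruct (IH HnC _ Hdiri Hlubi) as [e [[d [[Hd _] Hfd]] [y' [Hr' HnC']]]].
    exists d; split; auto. exists y'; split; auto.
    econstructor; [exists f; split; eauto|]; auto.
Qed.

End Aux.

Theorem lemma5p2 (S : Type) (le : S -> S -> Prop) (F : list (S -> option S)) :
  complete_functional_WSTS le F ->
  forall A : S -> Prop,
    subset (Post_star F (scott_cl le A)) (scott_cl le (Post_star F A)).
Proof.
  intros [[PO _] [_ HF]] A y [x [Hx Hr]] C HC HsubC.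
  pose (B := fun z => forall w, reach F z w -> C w).
  assert (HB : scott_closed le B).
  { split.
    - intros a b Ha Hab Hb. apply Ha. intros w Hw.
      destruct (@reach_mono S le PO F _ _ _ HF Hw Hab) as [w' [Hw' Hle]].
      apply NNPP; intro HnC. destruct HC as [Hup _].
      apply (Hup w w' HnC Hle). apply Hb; auto.
    - intros D u Hdir Hlub Hnu.
      apply not_all_ex_not in Hnu. destruct Hnu as [w Hw].
      apply imply_to_and in Hw. destruct Hw as [Hw HnC].
      destruct (@reach_inacc S le PO F C HF HC _ _ Hw HnC D Hdir Hlub) as [d [Hd [y' [Hr' Hn']]]].
      exists d; split; [auto|]. intro Hb; apply Hn'; apply Hb; auto. }
  apply (Hx B HB); auto.
  intros a Ha w Hw. apply HsubC. exists a; split; auto.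
Qed.
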